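(* Let $G$ be a group and $(\mathcal B_1,\Phi_1)\subseteq(\mathcal B_2,\Phi_2)$ a partial subaction of $G$ on generalized Boolean algebras, $\Phi_k=(\{\mathcal I_{k,t}\},\{\phi_{k,t}\})$, with $\mathcal B_1$ an ideal of $\mathcal B_2$. Let $$\mathcal B=\Big\{\bigcup_{i=1}^n\phi_{2,g_i}(V_i)\in\mathcal B_2: n\ge1,\ g_i\in G,\ V_i\in\mathcal B_1\cap\mathcal I_{2,g_i^{-1}}\Big\}.$$ Then $\mathcal B$ is a generalized Boolean algebra with $\mathcal B_1\subseteq\mathcal B\subseteq\mathcal B_2$, and $\mathcal B$ is an ideal of $\mathcal B_2$. Moreover, setting $\mathcal I_g=\mathcal B\cap\mathcal I_{2,g}$ (so $\mathcal I_{1,g}\subseteq\mathcal I_g\subseteq\mathcal I_{2,g}$), the restrictions $\phi_g$ of $\phi_{2,g}$ to $\mathcal I_{g^{-1}}$ are well-defined maps $\mathcal I_{g^{-1}}\to\mathcal I_g$ forming a partial action $\Phi$ of $G$ on $\mathcal B$, and $(\mathcal B_1,\Phi_1)\subseteq(\mathcal B,\Phi)\subseteq(\mathcal B_2,\Phi_2)$ are partial subactions.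
   Context: A generalized Boolean algebra is a distributive relatively complemented lattice with least element $0$ (joins $\cup$); an ideal is a subset closed under finite joins and under meets with arbitrary elements. A partial action $\Phi$ of $G$ on $\mathcal B$ consists of ideals $\mathcal I_t$ and lattice isomorphisms $\phi_t:\mathcal I_{t^{-1}}\to\mathcal I_t$ with $\mathcal I_e=\mathcal B$, $\phi_e=\mathrm{id}$, $\phi_s(\mathcal I_{s^{-1}}\cap\mathcal I_t)=\mathcal I_s\cap\mathcal I_{st}$, and $\phi_s\phi_t=\phi_{st}$ where defined. A partial subaction $(\mathcal B_1,\Phi_1)\subseteq(\mathcal B_2,\Phi_2)$: $\mathcal B_1$ is a sub generalized Boolean algebra of $\mathcal B_2$, $\mathcal I_{1,t}\subseteq\mathcal I_{2,t}$, and $\phi_{2,t}$ restricts to $\phi_{1,t}$ on $\mathcal I_{1,t^{-1}}$. *)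

(* Defs.v *)
(* generalized Boolean algebras are MathComp's
   cbDistrLatticeType (distributive lattices with bottom and sectional
   complement/difference); groups are (possibly infinite) groupType from
   boot/monoid.v; subsets are classical sets (mathcomp-classical). *)
From HB Require Import structures.
From mathcomp Require Import all_boot all_order.
From mathcomp Require Import boolp classical_sets.

Set Implicit Arguments.
Unset Strict Implicit.
Unset Printing Implicit Defensive.

Import Order.Theory.
Local Open Scope classical_set_scope.

Section Defs.
Context {d : Order.disp_t} {T : cbDistrLatticeType d} {G : groupType}.

Definition subGBA (S : set T) : Prop :=
  [/\ S \bot%O,
      (forall x y, S x -> S y -> S (Order.join x y)),
      (forall x y, S x -> S y -> S (Order.meet x y)) &
      (forall x y, S x -> S y -> S (Order.diff x y))].

Definition ideal_of (S I : set T) : Prop :=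
  [/\ I `<=` S, I \bot%O,
      (forall x y, I x -> I y -> I (Order.join x y)) &
      (forall x y, I x -> S y -> I (Order.meet x y))].

(* f is a lattice isomorphism from A onto B (f given as a total map on T
   whose restriction to A is considered). *)
Definition lattice_iso_on (f : T -> T) (A B : set T) : Prop :=
  [/\ (forall x, A x -> B (f x)),
      (forall x y, A x -> A y -> f x = f y -> x = y),
      (forall y, B y -> exists2 x, A x & f x = y),
      (forall x y, A x -> A y -> f (Order.join x y) = Order.join (f x) (f y)) &
      (forall x y, A x -> A y -> f (Order.meet x y) = Order.meet (f x) (f y))].

(* A partial action (I, phi) of G on the generalized Boolean algebra S;
   phi t is the map I (t^-1) -> I t (the restriction of phi t). *)
Definition partial_action (S : set T) (I : G -> set T) (phi : G -> T -> T)
  : Prop :=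
  [/\ subGBA S,
      (forall t, ideal_of S (I t)),
      I 1%g = S &
      (forall x, S x -> phi 1%g x = x)] /\
  [/\ (forall t, lattice_iso_on (phi t) (I (t^-1)%g) (I t)),
      (forall s t, phi s @` (I (s^-1)%g `&` I t) = I s `&` I (s * t)%g) &
      (forall s t x, I (t^-1)%g x -> I (s^-1)%g (phi t x) ->
         phi s (phi t x) = phi (s * t)%g x)].

Definition partial_subaction (S1 : set T) (I1 : G -> set T)
  (phi1 : G -> T -> T) (S2 : set T) (I2 : G -> set T) (phi2 : G -> T -> T)
  : Prop :=
  [/\ subGBA S1, S1 `<=` S2,
      (forall t, I1 t `<=` I2 t) &
      (forall t x, I1 (t^-1)%g x -> phi2 t x = phi1 t x)].

Definition orbit_joins (B1 : set T) (I2 : G -> set T) (phi2 : G -> T -> T)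
  : set T :=
  [set x | exists n : nat, exists g : 'I_n.+1 -> G, exists V : 'I_n.+1 -> T,
     (forall i, B1 (V i) /\ I2 ((g i)^-1)%g (V i)) /\
     x = \join_(i < n.+1) phi2 (g i) (V i)]%O.

End Defs.

(* Main.v *)
Require Import Defs.
From HB Require Import structures.
From mathcomp Require Import all_boot all_order.
From mathcomp Require Import boolp classical_sets.
From Stdlib Require List.
Local Open Scope classical_set_scope.

Import Order.Theory.

Definition LJ {d : Order.disp_t} {T : cbDistrLatticeType d} {G : groupType}
  (B1 : set T) (I2 : G -> set T) (phi2 : G -> T -> T) : set T :=
  [set x | exists s : seq (G * T),
     (forall p, List.In p s -> B1 p.2 /\ I2 (p.1^-1)%g p.2) /\
     x = (\join_(p <- s) phi2 p.1 p.2)%O].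

Section H.
Local Open Scope order_scope.

Lemma ideal_le {d : Order.disp_t} {T : cbDistrLatticeType d} (J : set T) x y :
  ideal_of [set: T] J -> J y -> x <= y -> J x.
Proof.
case=> _ _ _ hm Jy /meet_idPr <-. by apply: hm.
Qed.

Lemma phi_bot {d : Order.disp_t} {T : cbDistrLatticeType d} {G : groupType}
  (I2 : G -> set T) phi2 t :
  partial_action [set: T] I2 phi2 -> phi2 t \bot = \bot.
Proof.
case=> [[_ hid _ _] [hiso _ _]].
have [hmap _ hsurj _ hmeet] := hiso t.
have [_ b1 _ _] := hid t. have [_ b2 _ _] := hid (t^-1)%g.
have [x Ix fx] := hsurj _ b1.
by rewrite -[in LHS](meet0x x) hmeet // fx meetx0.
Qed.

Lemma phiK {d : Order.disp_t} {T : cbDistrLatticeType d} {G : groupType}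
  (I2 : G -> set T) phi2 t x :
  partial_action [set: T] I2 phi2 -> I2 (t^-1)%g x ->
  phi2 (t^-1)%g (phi2 t x) = x.
Proof.
case=> [[_ hid _ h1] [hiso _ hcomp]] Ix.
have [hmap _ _ _ _] := hiso t.
rewrite hcomp ?mulVg ?h1 ?invgK //. exact: hmap.
Qed.

Lemma valid_comp {d : Order.disp_t} {T : cbDistrLatticeType d} {G : groupType}
  (I2 : G -> set T) phi2 g h V :
  partial_action [set: T] I2 phi2 -> I2 (h^-1)%g V ->
  I2 (g^-1)%g (phi2 h V) ->
  I2 ((g * h)^-1)%g V /\ phi2 g (phi2 h V) = phi2 (g * h)%g V.
Proof.
move=> PA IV Ig.
have PA' := PA.
case: PA' => [[_ hid _ h1] [hiso himg hcomp]].
split; last by rewrite hcomp.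
have [hmap _ _ _ _] := hiso h.
have := himg (h^-1)%g (g^-1)%g.
move=> /(congr1 (fun S => S (phi2 (h^-1)%g (phi2 h V)))).
rewrite invgK -invgM => e.
have hL : (phi2 (h^-1)%g @` (I2 h `&` I2 (g^-1)%g)%classic) (phi2 (h^-1)%g (phi2 h V)).
  by exists (phi2 h V) => //; split => //; apply: hmap.
have := (fun P Q (e : P = Q) (p : P) => @eq_ind Prop P id p Q e) _ _ e.
move=> /(_ hL) [] _.
by rewrite (phiK _ _ _ _ PA IV).
Qed.

Lemma LJ_join {d : Order.disp_t} {T : cbDistrLatticeType d} {G : groupType}
  (B1 : set T) (I2 : G -> set T) phi2 x y :
  LJ B1 I2 phi2 x -> LJ B1 I2 phi2 y -> LJ B1 I2 phi2 (x `|` y).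
Proof.
move=> [s [hs ->]] [r [hr ->]]; exists (s ++ r); split; last by rewrite big_cat.
by move=> p hp; case: (List.in_app_or _ _ _ hp) => [/hs|/hr].
Qed.

Lemma LJ_meet {d : Order.disp_t} {T : cbDistrLatticeType d} {G : groupType}
  (B1 : set T) (I2 : G -> set T) phi2 x y :
  partial_action [set: T] I2 phi2 -> ideal_of [set: T] B1 ->
  LJ B1 I2 phi2 x -> LJ B1 I2 phi2 (x `&` y).
Proof.
move=> PA hB1 [s [hs ->]]; elim: s hs => [|[g V] s IH] hs.
  by exists [::]; split => //; rewrite !big_nil meet0x.
have [hV1 hV2] := hs _ (or_introl erefl).
have [s' [hs' e]] := IH (fun p hp => hs p (or_intror hp)).
case: PA => [[_ hid _ _] [hiso _ _]].
have [hmap _ hsurj _ hmeet] := hiso g.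
have [_ _ _ hm] := hid g. have [_ _ _ hm'] := hid (g^-1)%g.
have [w Iw fw] := hsurj (phi2 g V `&` y) (hm _ _ (hmap _ hV2) I).
exists ((g, w `&` V) :: s'); split.
  move=> p /= [<-|/hs'] //=; split; last exact: hm'.
  have [_ _ _ hb] := hB1; rewrite meetC; exact: hb.
rewrite !big_cons /= meetUl e hmeet // fw.
by rewrite meetAC meetxx.
Qed.

Lemma LJ_phi {d : Order.disp_t} {T : cbDistrLatticeType d} {G : groupType}
  (B1 : set T) (I2 : G -> set T) phi2 g x :
  partial_action [set: T] I2 phi2 ->
  LJ B1 I2 phi2 x -> I2 (g^-1)%g x -> LJ B1 I2 phi2 (phi2 g x).
Proof.
move=> PA [s [hs ->]]; elim: s hs => [|[h V] s IH] hs.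
  by move=> _; exists [::]; split => //; rewrite !big_nil (phi_bot _ _ _ PA).
have [hV1 hV2] := hs _ (or_introl erefl).
rewrite big_cons /= => Ij.
have hid : ideal_of [set: T] (I2 (g^-1)%g) by case: PA => -[_ hid _ _] _.
have I1 : I2 (g^-1)%g (phi2 h V) by apply: (ideal_le _ _ _ hid) Ij (leUl _ _).
have I2' : I2 (g^-1)%g (\join_(j <- s) phi2 j.1 j.2) by apply: (ideal_le _ _ _ hid) Ij (leUr _ _).
have [s' [hs' e]] := IH (fun p hp => hs p (or_intror hp)) I2'.
have PA' := PA; case: PA' => [_ [hiso _ _]].
have [_ _ _ hjoin _] := hiso g.
have [v1 v2] := valid_comp _ _ _ _ _ PA hV2 I1.
exists (((g * h)%g, V) :: s'); split.
  by move=> p /= [<-|/hs'].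
by rewrite hjoin // big_cons /= e v2.
Qed.

End H.


Lemma In_nth {A : Type} (x0 : A) (s : seq A) i : (i < size s)%N -> List.In (nth x0 s i) s.
Proof.
elim: s i => [|a s IH] [|i] //= hi; first by left.
by right; apply: IH.
Qed.

Lemma orbit_LJ {d : Order.disp_t} {T : cbDistrLatticeType d} {G : groupType}
  (B1 : set T) (I2 : G -> set T) phi2 :
  phi2 1%g \bot%O = \bot%O -> B1 \bot%O -> I2 (1^-1)%g \bot%O ->
  orbit_joins B1 I2 phi2 = LJ B1 I2 phi2.
Proof.
move=> e1 b1 i1; apply/funext => x; apply/propext; split.
  case=> n [g [V [hV ->]]].
  exists [seq (g i, V i) | i <- enum 'I_n.+1]; split.
    move=> p /List.in_map_iff [i [<- _]] /=; exact: hV.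
  by rewrite big_map big_enum.
case=> [[|p s]] [hs ->].
  exists 0%N, (fun _ => 1%g), (fun _ => \bot%O); split => //.
  by rewrite big_nil big_ord1.
exists (size s), (fun i => (nth (1%g, \bot%O) (p :: s) i).1),
  (fun i => (nth (1%g, \bot%O) (p :: s) i).2); split.
  by move=> i; apply: hs; apply: In_nth.
rewrite (big_nth (1%g, \bot%O)) big_mkord //.
Qed.

Theorem lemma4p11 (G : groupType) (d : Order.disp_t) (T : cbDistrLatticeType d)
  (B1 : set T) (I1 I2 : G -> set T) (phi1 phi2 : G -> T -> T) :
  partial_action [set: T] I2 phi2 ->
  partial_action B1 I1 phi1 ->
  partial_subaction B1 I1 phi1 [set: T] I2 phi2 ->
  ideal_of [set: T] B1 ->
  let B := orbit_joins B1 I2 phi2 in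
  let I := fun g : G => B `&` I2 g in
  [/\ subGBA B, B1 `<=` B & ideal_of [set: T] B] /\
  (forall g, I1 g `<=` I g /\ I g `<=` I2 g) /\
  (forall g x, I (g^-1)%g x -> I g (phi2 g x)) /\
  [/\ partial_action B I phi2,
      partial_subaction B1 I1 phi1 B I phi2 &
      partial_subaction B I phi2 [set: T] I2 phi2].
Proof.
move=> PA PA1 SA hB1.
have PA' := PA; case: PA' => [[_ hid hI1 h1] [hiso himg hcomp]].
have [_ hB1bot _ hB1m] := hB1.
have bot1 : phi2 1%g \bot%O = \bot%O by apply: h1.
have i1 : I2 (1^-1)%g \bot%O by rewrite invg1 hI1.
rewrite (orbit_LJ _ _ _ bot1 hB1bot i1) => B I.
have hBbot : B \bot%O by exists [::]; rewrite big_nil.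
have hB1B : B1 `<=` B.
  move=> x hx; exists [:: (1%g, x)]; split.
    by move=> p /= [<-|//] /=; rewrite invg1 hI1.
  by rewrite big_cons big_nil /= h1 // joinx0.
have hBjoin : forall x y, B x -> B y -> B (Order.join x y) by move=> x y; apply: LJ_join.
have hBmeet : forall x y, B x -> B (Order.meet x y) by move=> x y; apply: LJ_meet.
have hBideal : ideal_of [set: T] B by split => // x y hx _; apply: hBmeet.
have hBsub : subGBA B.
  split => // x y hx _; first exact: hBmeet.
  rewrite -(meet_idPr (leBx x y)); exact: hBmeet.
have item5 : forall g x, I (g^-1)%g x -> I g (phi2 g x).
  move=> g x [Bx Ix]; split; first exact: LJ_phi.
  by have [m _ _ _ _] := hiso g; apply: m.
have hI1I : forall g, I1 g `<=` I g.
  move=> g x hx; have [[_ hid1 _ _] _] := PA1; have [s1 _ _ _] := hid1 g.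
  have [_ _ s3 _] := SA; split; [exact/hB1B/s1 | exact: s3].
split; first by split.
split; first by move=> g; split => //; move=> x [].
split; first exact: item5.
split.
- split; split => //.
  + move=> t; have [_ b j m] := hid t; split.
    * by move=> x [].
    * by split.
    * by move=> x y [? ?] [? ?]; split; [apply: hBjoin | apply: j].
    * by move=> x y [? ?] ?; split; [apply: hBmeet | apply: m].
  + by rewrite /I hI1 setIT.
  + by move=> x _; apply: h1.
  + move=> t; have [m inj surj j mt] := hiso t; split.
    * exact: item5.
    * by move=> x y [_ ?] [_ ?]; apply: inj.
    * move=> y Iy; exists (phi2 (t^-1)%g y).
        by apply: item5; rewrite invgK.
      have := phiK _ _ (t^-1)%g y PA; rewrite invgK; apply.
      by case: Iy.
    * by move=> x y [_ ?] [_ ?]; apply: j.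
    * by move=> x y [_ ?] [_ ?]; apply: mt.
  + move=> s t; apply/seteqP; split.
    * move=> _ [x [[Bx Isx] [_ Itx]] <-].
      have : (I2 s `&` I2 (s * t)%g) (phi2 s x) by rewrite -himg; exists x.
      case=> ? ?; split; split => //; exact: LJ_phi.
    * move=> y [[By Isy] [_ Isty]].
      have : (phi2 s @` (I2 (s^-1)%g `&` I2 t)) y by rewrite himg.
      case=> x [Ix Itx] ex; exists x => //.
      have hx : B x.
        have <- : phi2 (s^-1)%g y = x by rewrite -ex (phiK _ _ _ _ PA Ix).
        apply: LJ_phi => //; rewrite invgK //.
      by split; split.
  + by move=> s t x [_ ?] [_ ?]; apply: hcomp.
- have [_ _ _ s4] := SA; have [[sub1 _ _ _] _] := PA1.
  by split; [exact: sub1 | exact: hB1B | exact: hI1I | exact: s4].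
- by split => // t x [].
Qed.
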